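(* Let $0<i_1<i_2<\cdots<i_L$ be integers and $\mathcal S=\{x_0,x_{i_1},\ldots,x_{i_L}\}$, with corresponding restricted right-arm rotation distance $d_{RRA}^{\mathcal S}$. Then for every integer $n>i_L+4$ there exist finite rooted binary trees $T_1,T_2$, each with $n$ nodes, such that $d_{RRA}^{\mathcal S}(T_1,T_2)$ is defined and $d_{RRA}^{\mathcal S}(T_1,T_2)\ge 4n-4i_L-4$.
   Context: Trees: finite rooted binary trees, each internal vertex (node) having a left and a right child. The right arm consists of the root and all nodes reachable from the root by a path of right edges; the level of a node is its distance from the root. Right rotation at a node $N$ whose left child $M$ is a node (with $A,B$ the subtrees of $M$, $C$ the right subtree of $N$) replaces the subtree at $N$ by one whose root has left subtree $A$ and right child a node with left subtree $B$ and right subtree $C$; left rotation at $N$ is the inverse. Rotations preserve the number of nodes. $d_{RRA}^{\mathcal S}(T_1,T_2)$ is the minimal number of rotations, each at a right-arm node at one of the levels $0,i_1,\ldots,i_L$, required to transform $T_1$ into $T_2$; it is defined when such a sequence exists. *)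

(* Defs.v *)
From mathcomp Require Import all_boot.
Set Implicit Arguments. Unset Strict Implicit. Unset Printing Implicit Defensive.

(* Finite rooted binary trees: a leaf (empty subtree) or an internal node
   (vertex) with a left and a right subtree. *)
Inductive tree : Type := Leaf | Node of tree & tree.

Fixpoint nodes (t : tree) : nat :=
  if t is Node l r then (nodes l + nodes r).+1 else 0.

Definition rotR (t : tree) : option tree :=
  match t with
  | Node (Node a b) c => Some (Node a (Node b c))
  | _ => None
  end.

Definition rotL (t : tree) : option tree :=
  match t with
  | Node a (Node b c) => Some (Node (Node a b) c)
  | _ => None
  end.

(* Apply a local operation f at the right-arm node at level k
   (reached from the root by k right edges); None if no such node
   or if f fails there. *)
Fixpoint at_arm (k : nat) (f : tree -> option tree) (t : tree) : option tree :=
  match k, t with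
  | 0, Node _ _ => f t
  | k'.+1, Node l r =>
      match at_arm k' f r with Some r' => Some (Node l r') | None => None end
  | _, Leaf => None
  end.

Definition rra_step (levels : seq nat) (t1 t2 : tree) : Prop :=
  exists2 k, k \in levels &
    (at_arm k rotR t1 = Some t2 \/ at_arm k rotL t1 = Some t2).

Fixpoint rra_reach (levels : seq nat) (m : nat) (t1 t2 : tree) : Prop :=
  match m with
  | 0 => t1 = t2
  | m'.+1 => exists t, rra_step levels t1 t /\ rra_reach levels m' t t2
  end.

Definition rra_defined (levels : seq nat) (t1 t2 : tree) : Prop :=
  exists m, rra_reach levels m t1 t2.

Definition rra_dist_ge (levels : seq nat) (t1 t2 : tree) (d : nat) : Prop :=
  rra_defined levels t1 t2 /\ forall m, rra_reach levels m t1 t2 -> d <= m.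

(* Main.v *)
Require Import Defs.
From mathcomp Require Import all_boot.
From mathcomp Require Import zify.
Set Implicit Arguments. Unset Strict Implicit. Unset Printing Implicit Defensive.

Inductive ltr := LLeaf | LNode of ltr & nat & ltr.

Fixpoint keys u := if u is LNode l x r then keys l ++ x :: keys r else [::].
Fixpoint arm u := if u is LNode _ x r then x :: arm r else [::].
Fixpoint anc u p d : bool :=
  if u is LNode l x r then
    ((x == p) && (d \in keys l ++ keys r)) || anc l p d || anc r p d
  else false.
Fixpoint lab t o := if t is Node l r then
   LNode (lab l o) (o + nodes l) (lab r (o + nodes l).+1) else LLeaf.

Definition plug (c : seq (ltr * nat)) s := foldr (fun lx acc => LNode lx.1 lx.2 acc) s c.
Definition kctx (c : seq (ltr * nat)) := flatten [seq keys lx.1 ++ [:: lx.2] | lx <- c].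
Fixpoint ancC (c : seq (ltr * nat)) K p d : bool :=
  if c is lx :: c' then
    ((lx.2 == p) && (d \in keys lx.1 ++ (kctx c' ++ K))) || anc lx.1 p d || ancC c' K p d
  else false.

Definition isRotR s s' := exists A x B y C,
  s = LNode (LNode A x B) y C /\ s' = LNode A x (LNode B y C).
Definition lstep k u u' := exists c s s', size c = k /\ u = plug c s /\ u' = plug c s' /\
  (isRotR s s' \/ isRotR s' s).

Lemma keys_plug c s : keys (plug c s) = kctx c ++ keys s.
Proof. by elim: c => [|[l x] c IH] //=; rewrite IH -!catA. Qed.
Lemma arm_plug c s : arm (plug c s) = map snd c ++ arm s.
Proof. by elim: c => [|[l x] c IH] //=; rewrite IH. Qed.
Lemma anc_plug c s p d : anc (plug c s) p d = ancC c (keys s) p d || anc s p d.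
Proof.
elim: c => [|[l x] c IH] //=; rewrite IH keys_plug; by rewrite !orbA.
Qed.

Lemma anc_keys u p d : anc u p d -> (p \in keys u) && (d \in keys u).
Proof.
elim: u => [|l IHl x r IHr] //=.
case/orP=> [/orP[/andP[/eqP-> hd]|/IHl/andP[h1 h2]]|/IHr/andP[h1 h2]].
- rewrite mem_cat in_cons eqxx orbT /=. move: hd; rewrite !mem_cat in_cons.
  by case/orP=> ->; rewrite ?orbT.
- by rewrite !mem_cat h1 h2.
- by rewrite !mem_cat !in_cons h1 h2 !orbT.
Qed.

Lemma arm_keys u x : x \in arm u -> x \in keys u.
Proof.
elim: u => [|l _ y r IH] //=; rewrite in_cons mem_cat in_cons.
by case/orP=> [->|/IH ->]; rewrite ?orbT.
Qed.

Lemma anc_arm u x y : uniq (keys u) -> y \in arm u -> anc u x y -> x \in arm u.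
Proof.
elim: u => [|l IHl r0 r IHr] //= hu.
move: (hu); rewrite cat_uniq /= => /and3P[ul /norP[nl nh] /andP[nr ur]].
rewrite in_cons => /orP[/eqP->|yr].
  move=> /orP[/orP[/andP[_ h]|h]|h]; exfalso.
  - by move: h; rewrite mem_cat => /orP[h|h]; [move: nl|move: nr]; rewrite h.
  - by move: (anc_keys h) nl => /andP[_ ->].
  - by move: (anc_keys h) nr => /andP[_ ->].
case/orP=> [/orP[/andP[/eqP-> _]|/anc_keys/andP[_ h]]|h].
- by rewrite in_cons eqxx.
- have yk := arm_keys yr. move/hasPn: nh => nh.
  by move: (nh _ yk); rewrite h.
- by rewrite in_cons (IHr ur yr h) orbT.
Qed.

Lemma lstep_keys k u u' : lstep k u u' -> keys u' = keys u.
Proof.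
case=> c [s [s' [_ [-> [-> h]]]]]; rewrite !keys_plug; congr (_ ++ _).
by case: h => -[A [x [B [y [C [-> ->]]]]]] /=; rewrite -!catA.
Qed.

Lemma lstep_arm k u u' : lstep k u u' ->
  exists x0, forall y, y != x0 -> (y \in arm u') = (y \in arm u).
Proof.
case=> c [s [s' [_ [-> [-> h]]]]].
case: h => -[A [x [B [y [C [-> ->]]]]]]; exists x => z hz;
  by rewrite !arm_plug /= !mem_cat !in_cons (negbTE hz).
Qed.

Lemma lstep_loss k u u' p d : lstep k u u' -> anc u p d -> ~~ anc u' p d -> p \in arm u.
Proof.
move=> st; have ek := lstep_keys st; move: st.
case=> c [s [s' [_ [eu [eu' h]]]]].
have eks : keys s' = keys s.
  by case: h => -[A [x [B [y [C [-> ->]]]]]] /=; rewrite -!catA.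
rewrite eu eu' !anc_plug eks arm_plug.
case: (ancC c (keys s) p d) => //= h1 h2.
case: h => -[A [x [B [y [C [es es']]]]]]; move: h1 h2; rewrite es es' /=.
- case: (eqVneq y p) => [->|nyp]; first by move=> _ _; rewrite mem_cat mem_head orbT.
  rewrite !mem_cat !in_cons /=.
  case: (x == p); case: (d \in keys A); case: (d \in keys B); case: (d \in keys C);
  case: (d == x); case: (d == y); case: (anc A p d); case: (anc B p d); case: (anc C p d) => //.
- case: (eqVneq x p) => [->|nxp]; first by move=> _ _; rewrite mem_cat mem_head orbT.
  rewrite !mem_cat !in_cons /=.
  case: (y == p); case: (d \in keys A); case: (d \in keys B); case: (d \in keys C);
  case: (d == x); case: (d == y); case: (anc A p d); case: (anc B p d); case: (anc C p d) => //.
Qed.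

Lemma lstep_gain k u u' p d : lstep k u u' -> ~~ anc u p d -> anc u' p d -> p \in arm u'.
Proof.
move=> st; have ek := lstep_keys st; move: st.
case=> c [s [s' [_ [eu [eu' h]]]]].
have eks : keys s' = keys s.
  by case: h => -[A [x [B [y [C [-> ->]]]]]] /=; rewrite -!catA.
rewrite eu eu' !anc_plug eks arm_plug.
case: (ancC c (keys s) p d) => //= h1 h2.
case: h => -[A [x [B [y [C [es es']]]]]]; move: h1 h2; rewrite es es' /=.
- case: (eqVneq x p) => [->|nxp]; first by move=> _ _; rewrite mem_cat mem_head orbT.
  rewrite !mem_cat !in_cons /=.
  case: (y == p); case: (d \in keys A); case: (d \in keys B); case: (d \in keys C);
  case: (d == x); case: (d == y); case: (anc A p d); case: (anc B p d); case: (anc C p d) => //.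
- case: (eqVneq y p) => [->|nyp]; first by move=> _ _; rewrite mem_cat mem_head orbT.
  rewrite !mem_cat !in_cons /=.
  case: (x == p); case: (d \in keys A); case: (d \in keys B); case: (d \in keys C);
  case: (d == x); case: (d == y); case: (anc A p d); case: (anc B p d); case: (anc C p d) => //.
Qed.

Lemma lstep_exit k u u' z : lstep k u u' -> z \in arm u -> z \notin arm u' ->
  exists c A B y C, [/\ size c = k, u = plug c (LNode A z (LNode B y C)) &
     u' = plug c (LNode (LNode A z B) y C)].
Proof.
case=> c [s [s' [sk [-> [-> h]]]]].
case: h => -[A [x [B [y [C [-> ->]]]]]]; rewrite !arm_plug /= !mem_cat !in_cons.
- by case: (z \in map snd c); case: (z == y); case: (z == x); case: (z \in arm C).
- case: (z \in map snd c) => //=; case: (eqVneq z x) => [->|nzx] /=.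
    by move=> _ _; exists c, A, B, y, C.
  by move=> ->.
Qed.

Lemma anc_plug_root c A z B d : d \in keys A -> anc (plug c (LNode A z B)) z d.
Proof. by move=> h; rewrite anc_plug /= eqxx mem_cat h !orbT. Qed.

Lemma keys_lab t o : keys (lab t o) = iota o (nodes t).
Proof.
elim: t o => [|l IHl r IHr] o //.
have -> : keys (lab (Node l r) o) = keys (lab l o) ++ (o + nodes l) :: keys (lab r (o + nodes l).+1) by [].
rewrite IHl IHr. change (nodes (Node l r)) with (nodes l + nodes r).+1.
by rewrite -[(nodes l + nodes r).+1]addnS iotaD.
Qed.

Lemma rot_nodes g t t' : (g = rotR \/ g = rotL) -> g t = Some t' -> nodes t' = nodes t.
Proof.
case=> ->.
- by case: t => [|[|a b] c] //= [<-] /=; lia.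
- by case: t => [|a [|b c]] //= [<-] /=; lia.
Qed.

Lemma at_arm_nodes k g t t' : (g = rotR \/ g = rotL) -> at_arm k g t = Some t' -> nodes t' = nodes t.
Proof.
move=> hg; elim: k t t' => [|k IH] [|l r] t' //=.
- by move=> h; rewrite (rot_nodes hg h).
- case e: (at_arm k g r) => [r'|] //= [<-] /=; by rewrite (IH _ _ e).
Qed.

Lemma lab_step k g t t' o : (g = rotR \/ g = rotL) -> at_arm k g t = Some t' ->
  lstep k (lab t o) (lab t' o).
Proof.
move=> hg; elim: k t t' o => [|k IH] [|l r] t' o //=.
- case: hg => -> /=.
  + case: l => [|a b] //= [<-] /=.
    exists [::], (lab (Node (Node a b) r) o), (lab (Node a (Node b r)) o); do 3!split => //.
    left; rewrite /=.
    have e : (o + nodes a).+1 + nodes b = o + (nodes a + nodes b).+1 by lia.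
    rewrite e; do 5!eexists; split; reflexivity.
  + case: r => [|b c0] //= [<-] /=.
    exists [::], (lab (Node l (Node b c0)) o), (lab (Node (Node l b) c0) o); do 3!split => //.
    right; rewrite /=.
    have e : (o + nodes l).+1 + nodes b = o + (nodes l + nodes b).+1 by lia.
    rewrite e; do 5!eexists; split; reflexivity.
- case e: (at_arm k g r) => [r'|] //= [<-] /=.
  have nr := at_arm_nodes hg e.
  case: (IH _ _ (o + nodes l).+1 e) => c [s [s' [sk [e1 [e2 h]]]]].
  exists ((lab l o, o + nodes l) :: c), s, s'; rewrite /= sk -e1 -e2 ?nr; by [].
Qed.

Lemma rra_step_l S t t' o : rra_step S t t' -> exists2 k, k \in S & lstep k (lab t o) (lab t' o).
Proof.
case=> k kS [h|h]; exists k => //.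
  exact: (@lab_step k rotR t t' o (or_introl erefl) h).
exact: (@lab_step k rotL t t' o (or_intror erefl) h).
Qed.

Lemma reach_path S m t1 t2 : rra_reach S m t1 t2 ->
  exists f : nat -> tree, [/\ f 0 = t1, f m = t2 & forall j, j < m -> rra_step S (f j) (f j.+1)].
Proof.
elim: m t1 => [|m IH] t1 /=.
  by move=> ->; exists (fun _ => t2).
case=> t [st /IH [f [f0 fm fs]]].
exists (fun j => if j is j'.+1 then f j' else t1); split => //.
by case=> [|j] /= hj; [rewrite f0 | apply: fs].
Qed.

Lemma trans_ex (P : nat -> bool) a c : a <= c -> P a -> ~~ P c ->
  exists j, [/\ a <= j, j < c, P j & ~~ P j.+1].
Proof.
elim: c => [|c IH] ac Pa Pc; first by move: ac; rewrite leqn0 => /eqP e; move: Pa Pc; rewrite e => ->.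
case: (leqP a c) => [ac'|ca].
  case Pc': (P c).
    by exists c; split.
  by case: (IH ac' Pa (negbT Pc')) => j [h1 h2 h3 h4]; exists j; split => //; lia.
have e : a = c.+1 by lia.
by move: Pa Pc; rewrite e => ->.
Qed.

Lemma last_exit (P : nat -> bool) w T : w <= T -> P w -> ~~ P T ->
  exists t, [/\ w <= t, t < T, P t & forall j, t < j <= T -> ~~ P j].
Proof.
elim: T => [|T IH] wT Pw PT; first by move: wT; rewrite leqn0 => /eqP e; move: Pw PT; rewrite e => ->.
case PT': (P T).
  exists T; split => //.
    case: (leqP w T) => // h; have e : w = T.+1 by lia.
    by move: Pw PT; rewrite e => ->.
  move=> j hj; have -> : j = T.+1 by lia. exact PT.
case: (leqP w T) => [wT'|h].
  case: (IH wT' Pw (negbT PT')) => t [h1 h2 h3 h4]; exists t; split => //; first lia.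
  move=> j hj; case: (leqP j T) => hjT; first by apply: h4; lia.
  have -> : j = T.+1 by lia. exact PT.
have e : w = T.+1 by lia.
by move: Pw PT; rewrite e => ->.
Qed.

Definition chg (b : nat -> bool) a c := \sum_(a <= j < c) (b j != b j.+1 : nat).

Lemma chg_split b a c e : a <= c -> c <= e -> chg b a e = chg b a c + chg b c e.
Proof. by move=> h1 h2; rewrite /chg (big_cat_nat h1 h2). Qed.

Lemma chg_pos b a c : a <= c -> b a != b c -> 0 < chg b a c.
Proof.
elim: c => [|c IH] ac hb; first by move: ac hb; rewrite leqn0 => /eqP ->; rewrite eqxx.
case: (leqP a c) => [ac'|ca]; last first.
  have e : a = c.+1 by lia.
  by move: hb; rewrite e eqxx.
rewrite /chg big_nat_recr //= -/(chg b a c).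
case: (eqVneq (b a) (b c)) => [e|ne].
  by rewrite -e hb addn1.
by move: (IH ac' ne); lia.
Qed.

Lemma chg2 b s T : s <= T -> b 0 = false -> b s = true -> b T = false -> 2 <= chg b 0 T.
Proof.
move=> sT b0 bs bT; rewrite (chg_split b (leq0n s) sT).
have h1 := chg_pos (b:=b) (leq0n s); have h2 := chg_pos (b:=b) sT.
rewrite b0 bs bT in h1 h2; move: (h1 isT) (h2 isT); lia.
Qed.

Lemma chg4 b s t w T : s <= t -> t <= w -> w <= T -> b 0 = false -> b s = true -> b t = false ->
  b w = true -> b T = false -> 4 <= chg b 0 T.
Proof.
move=> st tw wT b0 bs bt bw bT.
have sw : s <= w by lia. have sT : s <= T by lia. have tT : t <= T by lia.
rewrite (chg_split b (leq0n s) sT) (chg_split b st tT) (chg_split b tw wT).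
have h1 := chg_pos (b:=b) (leq0n s); have h2 := chg_pos (b:=b) st; have h3 := chg_pos (b:=b) tw;
have h4 := chg_pos (b:=b) wT.
rewrite b0 bs bt bw bT in h1 h2 h3 h4; move: (h1 isT) (h2 isT) (h3 isT) (h4 isT); lia.
Qed.

Lemma flips_le (A : nat -> seq nat) (s : seq nat) T : uniq s ->
  (forall j, j < T -> exists x0, forall y, y != x0 -> (y \in A j.+1) = (y \in A j)) ->
  \sum_(x <- s) chg (fun j => x \in A j) 0 T <= T.
Proof.
move=> us hA; rewrite /chg exchange_big /=.
apply: (@leq_trans (\sum_(0 <= j < T) 1)); last by rewrite sum_nat_const_nat subn0 muln1.
rewrite big_nat_cond [X in _ <= X]big_nat_cond.
apply: leq_sum => j /andP[/andP[_ jT] _].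
case: (hA j jT) => x0 hx0.
apply: (@leq_trans (\sum_(x <- s) (if x == x0 then 1 else 0))).
  apply: leq_sum => x _; case: (eqVneq x x0) => [//|nx]; first by case: (_ != _).
  by rewrite (hx0 x nx) eqxx.
rewrite -big_mkcond sum1_count /= count_uniq_mem //; by case: (_ \in _).
Qed.

Definition rp k := iter k (Node Leaf) Leaf.
Definition lcx k X := iter k (fun t => Node t Leaf) X.
Definition lc k := lcx k Leaf.
Definition T1 c n := Node (Node (Node (lc c) (rp (n - 3 - c))) Leaf) Leaf.
Definition T2 c n := Node (Node (lc c) (rp (n - 2 - c))) Leaf.

Lemma nodes_rp k : nodes (rp k) = k.
Proof. by elim: k => //= k ->. Qed.
Lemma nodes_lc k : nodes (lc k) = k.
Proof. by elim: k => //= k ->; rewrite addn0. Qed.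

Lemma ancL l x r p d : anc l p d -> anc (LNode l x r) p d.
Proof. by move=> /= ->; rewrite orbT. Qed.
Lemma ancR l x r p d : anc r p d -> anc (LNode l x r) p d.
Proof. by move=> /= ->; rewrite orbT. Qed.
Lemma ancN l x r d : d \in keys l ++ keys r -> anc (LNode l x r) x d.
Proof. by move=> /= ->; rewrite eqxx. Qed.

Lemma lab_rpS k o : lab (rp k.+1) o = LNode LLeaf o (lab (rp k) o.+1).
Proof. by rewrite /= addn0. Qed.

Lemma rp_anc k o x y : o <= x -> x < y -> y < o + k -> anc (lab (rp k) o) x y.
Proof.
elim: k o => [|k IH] o h1 h2 h3; first lia.
rewrite lab_rpS; case: (eqVneq x o) => [->|nx].
  by apply: ancN; rewrite /= !keys_lab ?nodes_lc nodes_rp !mem_iota; apply/andP; split; lia.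
by apply: ancR; apply: IH; lia.
Qed.

Lemma rp_anc_inv k o x y : anc (lab (rp k) o) x y -> x < y.
Proof.
elim: k o => [|k IH] o //; rewrite lab_rpS /= orbF.
case/orP=> [/andP[/eqP <- ]|/IH] //; rewrite !keys_lab ?nodes_lc nodes_rp !mem_iota; lia.
Qed.

Section Trees.
Variables c n : nat.
Hypothesis hn : c + 5 <= n.

Lemma labT1 : lab (T1 c n) 1 = LNode (LNode (LNode (lab (lc c) 1) c.+1 (lab (rp (n - 3 - c)) c.+2))
   n.-1 LLeaf) n LLeaf.
Proof.
rewrite /T1 /= nodes_lc nodes_rp ?addn0.
have -> : 1 + c = c.+1 by lia.
have -> : 1 + (c + (n - 3 - c)).+1 = n.-1 by lia.
by have -> : 1 + (c + (n - 3 - c)).+2 = n by lia.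
Qed.

Lemma labT2 : lab (T2 c n) 1 = LNode (LNode (lab (lc c) 1) c.+1 (lab (rp (n - 2 - c)) c.+2)) n LLeaf.
Proof.
rewrite /T2 /= ?nodes_lc ?nodes_rp ?addn0.
have -> : 1 + c = c.+1 by lia.
by have -> : 1 + (c + (n - 2 - c)).+1 = n by lia.
Qed.

Lemma armT1 : arm (lab (T1 c n) 1) = [:: n].
Proof. by rewrite labT1. Qed.
Lemma armT2 : arm (lab (T2 c n) 1) = [:: n].
Proof. by rewrite labT2. Qed.

Lemma ancT1 x : c < x <= n - 3 -> anc (lab (T1 c n) 1) x (n - 2).
Proof.
move=> hx; rewrite labT1; apply: ancL; apply: ancL.
case: (eqVneq x c.+1) => [->|nx].
  by apply: ancN; rewrite mem_cat !keys_lab ?nodes_lc nodes_rp !mem_iota; apply/orP; right; apply/andP; split; lia.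
by apply: ancR; apply: rp_anc; lia.
Qed.

Lemma ancT1z : anc (lab (T1 c n) 1) n.-1 (n - 2).
Proof.
rewrite labT1; apply: ancL; apply: ancN.
by rewrite /= cats0 mem_cat /= in_cons !keys_lab ?nodes_lc nodes_rp !mem_iota; apply/orP; right; apply/orP; right; apply/andP; split; lia.
Qed.

Lemma ancT2 x : c < x <= n - 2 -> anc (lab (T2 c n) 1) x n.-1.
Proof.
move=> hx; rewrite labT2; apply: ancL.
case: (eqVneq x c.+1) => [->|nx].
  by apply: ancN; rewrite mem_cat !keys_lab ?nodes_lc nodes_rp !mem_iota; apply/orP; right; apply/andP; split; lia.
by apply: ancR; apply: rp_anc; lia.
Qed.

Lemma nancT2z d : ~~ anc (lab (T2 c n) 1) n.-1 d.
Proof.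
rewrite labT2 /= orbF; apply/negP.
case/orP=> [/andP[/eqP e _]|]; first lia.
case/orP=> [/orP[/andP[/eqP e _]|]|]; first lia.
  by move/anc_keys; rewrite keys_lab nodes_lc mem_iota; case/andP => /andP[_ h]; lia.
move=> h; have := rp_anc_inv h; move/anc_keys: h; rewrite !keys_lab ?nodes_lc nodes_rp !mem_iota.
case/andP=> _ /andP[_ h]; lia.
Qed.
End Trees.

Definition mkc (s : seq tree) u := foldr Node u s.

Lemma at_arm_mkc s k g u :
  at_arm (size s + k) g (mkc s u) =
  match at_arm k g u with Some u' => Some (mkc s u') | None => None end.
Proof.
elim: s => [|x s IH] /=; first by case: (at_arm k g u).
by rewrite IH; case: (at_arm k g u).
Qed.

Lemma at_arm_NLL k g : (g = rotR \/ g = rotL) -> at_arm k g (Node Leaf Leaf) = None.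
Proof. by case=> ->; case: k => [|[|k]]. Qed.

Section Chain.
Variables c n : nat.
Hypothesis hn : c + 5 <= n.
Let R1 := rp (n - 3 - c).
Let W := Node R1 (Node Leaf Leaf).

Definition ch i := match i with
  | 0 => T1 c n
  | 1 => Node (Node (lc c) R1) (Node Leaf Leaf)
  | j.+2 => Node (lc (c - j)) (mkc (nseq j Leaf) W) end.

Lemma lcS k : lc k.+1 = Node (lc k) Leaf.
Proof. by []. Qed.

Lemma ch_rotR i : i <= c.+1 -> at_arm 0 rotR (ch i) = Some (ch i.+1).
Proof.
case: i => [|[|j]] hi //=; first by rewrite subn0.
have -> : c - j = (c - j.+1).+1 by lia.
by [].
Qed.

Lemma ch_rotL i : i <= c.+1 -> at_arm 0 rotL (ch i) =
   if i is i'.+1 then Some (ch i') else None.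
Proof.
case: i => [|[|[|j]]] hi //=; first by rewrite subn0.
have -> : c - j = (c - j.+1).+1 by lia.
by [].
Qed.

Lemma ch_high i k g : i <= c.+1 -> c < k -> (g = rotR \/ g = rotL) -> at_arm k g (ch i) = None.
Proof.
move=> hi hk hg; case: k hk => [//|k] hk.
case: i hi => [|[|j]] hi /=.
- by case: k {hk}.
- by rewrite at_arm_NLL.
- have -> : k = size (nseq j Leaf) + (k - j) by rewrite size_nseq; lia.
  rewrite at_arm_mkc; have hkj : 0 < k - j by lia.
  by move: hkj; case: (k - j) => [//|kk] _ /=; rewrite at_arm_NLL.
Qed.

Lemma T2_ch i : i <= c.+1 -> T2 c n <> ch i.
Proof.
case: i => [|[|j]] hi //=.
- rewrite /T2 /T1 => -[] _; have -> : n - 2 - c = (n - 3 - c).+1 by lia.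
  by [].
- by case: j hi.
Qed.

Lemma chain S T (f : nat -> tree) :
  (forall k, k \in S -> k = 0 \/ c < k) ->
  f 0 = T1 c n -> f T = T2 c n -> (forall j, j < T -> rra_step S (f j) (f j.+1)) ->
  exists2 j, j <= T & f j = ch c.+2.
Proof.
move=> hS f0 fT fs.
suff: forall j, j <= T -> (exists2 i, i <= j & f i = ch c.+2) \/ (exists2 i, i <= c.+1 & f j = ch i).
  case/(_ T (leqnn T)) => [[i h1 h2]|[i h1 h2]]; first by exists i.
  by move: h2; rewrite fT => /T2_ch; case/(_ h1).
elim=> [|j IH] hj; first by right; exists 0.
case: (IH (ltnW hj)) => [[i h1 h2]|[i h1 h2]]; first by left; exists i => //; lia.
case: (fs j hj) => k /hS [->|hk] [h|h]; rewrite h2 in h.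
- rewrite ch_rotR // in h; case: h => h.
  case: (eqVneq i c.+1) => [e|ne]; first by left; exists j.+1 => //; rewrite -h e.
  by right; exists i.+1; rewrite -?h //; lia.
- rewrite ch_rotL // in h; case: i h1 h2 h => [//|i'] h1 h2 [h].
  by right; exists i'; rewrite -?h //; lia.
- by rewrite ch_high // in h; left.
- by rewrite ch_high // in h; right.
Qed.
End Chain.

Lemma arm_mkc_nseq q U o x : o <= x < o + q -> x \in arm (lab (mkc (nseq q Leaf) U) o).
Proof.
elim: q o => [|q IH] o hx /=; first lia.
rewrite addn0 in_cons; case: (eqVneq x o) => //= nx; apply: IH; lia.
Qed.

Lemma arm_ch_last c n x : 0 < x <= c -> x \in arm (lab (ch c n c.+2) 1).
Proof.
move=> hx.
change (ch c n c.+2) with (Node (lc (c - c)) (mkc (nseq c Leaf) (Node (rp (n - 3 - c)) (Node Leaf Leaf)))).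
rewrite subnn.
change (Node (lc 0) (mkc (nseq c Leaf) (Node (rp (n - 3 - c)) (Node Leaf Leaf)))) with
  (mkc (nseq c.+1 Leaf) (Node (rp (n - 3 - c)) (Node Leaf Leaf))).
apply: arm_mkc_nseq; lia.
Qed.

Definition reach S a b := exists m, rra_reach S m a b.

Lemma reach_refl S a : reach S a a.
Proof. by exists 0. Qed.

Lemma reach_cat S m1 m2 a b c : rra_reach S m1 a b -> rra_reach S m2 b c -> rra_reach S (m1 + m2) a c.
Proof.
elim: m1 a => [|m1 IH] a /=; first by move=> ->.
by case=> t [st r] r2; exists t; split => //; apply: IH r r2.
Qed.

Lemma reach_trans S a b c : reach S a b -> reach S b c -> reach S a c.
Proof. by case=> m1 h1 [m2 h2]; exists (m1 + m2); apply: reach_cat h1 h2. Qed.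

Lemma reach_step S a b : rra_step S a b -> reach S a b.
Proof. by move=> h; exists 1, b. Qed.

Lemma rot_rev t t' : rotR t = Some t' <-> rotL t' = Some t.
Proof.
split.
- by case: t => [|[|a b] c] //= [<-].
- by case: t' => [|a [|b c]] //= [<-].
Qed.

Lemma at_arm_rev k t t' : at_arm k rotR t = Some t' <-> at_arm k rotL t' = Some t.
Proof.
elim: k t t' => [|k IH] t t'.
- have a0 : forall g u, g Leaf = None -> at_arm 0 g u = g u by move=> g [|??].
  by rewrite !a0 //; exact: rot_rev.
- split.
  + case: t => [|l r] //=; case e: (at_arm k rotR r) => [x|] //= [<-] /=.
    by move/IH: e => ->.
  + case: t' => [|l r] //=; case e: (at_arm k rotL r) => [x|] //= [<-] /=.
    by move/IH: e => ->.
Qed.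

Lemma step_sym S a b : rra_step S a b -> rra_step S b a.
Proof.
case=> k kS [h|h]; exists k => //.
  by right; apply/at_arm_rev.
by left; apply/at_arm_rev.
Qed.

Lemma reach_sym S a b : reach S a b -> reach S b a.
Proof.
case=> m; elim: m a => [|m IH] a /=; first by move=> ->; apply: reach_refl.
case=> t [st r]; apply: reach_trans (IH _ r) _; exact: reach_step (step_sym st).
Qed.

Definition mk s := mkc s Leaf.

Lemma mk_cat Q X : mk (Q ++ X) = mkc Q (mk X).
Proof. by rewrite /mk /mkc foldr_cat. Qed.

Lemma lvl S Q g X X' : size Q \in S -> (g = rotR \/ g = rotL) ->
  at_arm 0 g (mk X) = Some (mk X') -> reach S (mk (Q ++ X)) (mk (Q ++ X')).
Proof.
move=> hQ hg h; apply: reach_step; exists (size Q) => //.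
have : at_arm (size Q + 0) g (mk (Q ++ X)) = Some (mk (Q ++ X')).
  by rewrite mk_cat at_arm_mkc h mk_cat.
by rewrite addn0; case: hg => <-; [left|right].
Qed.

Lemma lvl0 S g X X' : 0 \in S -> (g = rotR \/ g = rotL) ->
  at_arm 0 g (mk X) = Some (mk X') -> reach S (mk X) (mk X').
Proof. by move=> h0 hg h; apply: (@lvl S [::] g). Qed.

Lemma rel1 S p g e X X' : 0 \in S -> p \in S -> 0 < p -> (g = rotR \/ g = rotL) ->
  at_arm 0 g (mk X) = Some (mk X') ->
  reach S (mk (nseq p Leaf ++ e :: X)) (mk (nseq p Leaf ++ e :: X')).
Proof.
move=> h0 hp p0 hg h.
case: p p0 hp => [//|[|q]] _ hp.
- apply: (@reach_trans _ _ (mk (Node Leaf e :: X))).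
    by apply: (@lvl0 S rotL) => //; right.
  apply: (@reach_trans _ _ (mk (Node Leaf e :: X'))).
    by apply: (@lvl S [:: Node Leaf e] g).
  by apply: (@lvl0 S rotR) => //; left.
- set Wq := Node Leaf Leaf :: nseq q Leaf ++ [:: e].
  have e1 : forall Z, mk (nseq q.+2 Leaf ++ e :: Z) = mk (Leaf :: Leaf :: nseq q Leaf ++ e :: Z) by [].
  have e2 : forall Z, mk (Node Leaf Leaf :: nseq q Leaf ++ e :: Z) = mk (Wq ++ Z)
    by move=> Z; rewrite /Wq /= -catA.
  rewrite !e1.
  apply: (@reach_trans _ _ (mk (Wq ++ X))).
    rewrite -e2; by apply: (@lvl0 S rotL) => //; right.
  apply: (@reach_trans _ _ (mk (Wq ++ X'))).
    apply: (@lvl S Wq g) => //; by rewrite /Wq /= size_cat size_nseq addn1.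
  rewrite -e2; by apply: (@lvl0 S rotR) => //; left.
Qed.

Lemma nseq_consr (x : tree) k s : nseq k x ++ x :: s = x :: nseq k x ++ s.
Proof. by elim: k => //= k ->. Qed.

Lemma U1 S Q j Y : size Q \in S ->
  reach S (mk (Q ++ lc j :: Y)) (mk (Q ++ nseq j.+1 Leaf ++ Y)).
Proof.
move=> hQ; elim: j Y => [|j IH] Y; first exact: reach_refl.
apply: (@reach_trans _ _ (mk (Q ++ lc j :: Leaf :: Y))).
  by apply: (@lvl S Q rotR) => //; left.
by move: (IH (Leaf :: Y)); rewrite nseq_consr.
Qed.

Lemma peel S p j X Y : 0 \in S -> p \in S -> 0 < p ->
  reach S (mk (nseq p Leaf ++ X :: rp j :: Y)) (mk (nseq p Leaf ++ lcx j X :: Leaf :: Y)).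
Proof.
move=> h0 hp p0; elim: j X => [|j IH] X; first exact: reach_refl.
apply: (@reach_trans _ _ (mk (nseq p Leaf ++ X :: Leaf :: rp j :: Y))).
  by apply: (@rel1 S p rotR) => //; left.
apply: (@reach_trans _ _ (mk (nseq p Leaf ++ Node X Leaf :: rp j :: Y))).
  by apply: (@lvl S (nseq p Leaf) rotL) => //; [rewrite size_nseq | right].
by move: (IH (Node X Leaf)); rewrite /lcx iterSr.
Qed.

Lemma connect S p n : 0 \in S -> p \in S -> 0 < p -> p + 4 <= n ->
  reach S (T1 p.-1 n) (T2 p.-1 n).
Proof.
move=> h0 hp p0 hn.
set P := nseq p Leaf.
have eP : forall Z, mk (lc p.-1 :: Z) = mk ([::] ++ lc p.-1 :: Z) by [].
have hS0 : size (@nil tree) \in S by [].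
have hSP : size P \in S by rewrite size_nseq.
have r1 : reach S (T1 p.-1 n) (mk (nseq n Leaf)).
  have -> : T1 p.-1 n = mk [:: Node (Node (lc p.-1) (rp (n - 3 - p.-1))) Leaf] by [].
  apply: (@reach_trans _ _ (mk [:: Node (lc p.-1) (rp (n - 3 - p.-1)); Leaf])).
    by apply: (@lvl0 S rotR) => //; left.
  apply: (@reach_trans _ _ (mk [:: lc p.-1; rp (n - 3 - p.-1); Leaf])).
    by apply: (@lvl0 S rotR) => //; left.
  apply: (@reach_trans _ _ (mk (P ++ [:: rp (n - 3 - p.-1); Leaf]))).
    rewrite eP /P; move: (U1 (p.-1) [:: rp (n - 3 - p.-1); Leaf] hS0).
    by rewrite prednK.
  have -> : n - 3 - p.-1 = (n - 3 - p).+1 by lia.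
  apply: (@reach_trans _ _ (mk (P ++ [:: Leaf; rp (n - 3 - p); Leaf]))).
    by apply: (@lvl S P rotR) => //; left.
  apply: (@reach_trans _ _ (mk (P ++ [:: lcx (n - 3 - p) Leaf; Leaf; Leaf]))).
    exact: (peel (n - 3 - p) Leaf [:: Leaf]).
  move: (U1 (n - 3 - p) [:: Leaf; Leaf] hSP); rewrite -/(lc _) catA -nseqD.
  have -> : [:: Leaf; Leaf] = nseq 2 Leaf by [].
  by rewrite -nseqD; have -> : p + (n - 3 - p).+1 + 2 = n by lia.
have r2 : reach S (T2 p.-1 n) (mk (nseq n Leaf)).
  have -> : T2 p.-1 n = mk [:: Node (lc p.-1) (rp (n - 2 - p.-1))] by [].
  apply: (@reach_trans _ _ (mk [:: lc p.-1; rp (n - 2 - p.-1)])).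
    by apply: (@lvl0 S rotR) => //; left.
  apply: (@reach_trans _ _ (mk (P ++ [:: rp (n - 2 - p.-1)]))).
    rewrite eP /P; move: (U1 (p.-1) [:: rp (n - 2 - p.-1)] hS0).
    by rewrite prednK.
  have -> : n - 2 - p.-1 = (n - 2 - p).+1 by lia.
  apply: (@reach_trans _ _ (mk (P ++ [:: Leaf; rp (n - 2 - p)]))).
    by apply: (@lvl S P rotR) => //; left.
  apply: (@reach_trans _ _ (mk (P ++ [:: lcx (n - 2 - p) Leaf; Leaf]))).
    exact: (peel (n - 2 - p) Leaf [::]).
  move: (U1 (n - 2 - p) [:: Leaf] hSP); rewrite -/(lc _) catA -nseqD.
  have -> : [:: Leaf] = nseq 1 Leaf by [].
  by rewrite -nseqD; have -> : p + (n - 2 - p).+1 + 1 = n by lia.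
exact: reach_trans r1 (reach_sym r2).
Qed.

Lemma kctx_rcons c l x : kctx (rcons c (l, x)) = kctx c ++ keys l ++ [:: x].
Proof. by rewrite /kctx -cats1 map_cat flatten_cat /= cats0. Qed.

Lemma anc_plug_left c A z B y C d : d \in keys A ->
  anc (plug c (LNode (LNode A z B) y C)) z d.
Proof. by move=> h; rewrite anc_plug /= eqxx !mem_cat h /= !orbT. Qed.

Lemma sum_2count (a : pred nat) s :
  \sum_(x <- s) (2 + 2 * a x) = 2 * size s + 2 * count a s.
Proof. elim: s => [|x s IH]; rewrite ?big_nil ?big_cons //= IH; lia. Qed.

Lemma count_split (a b : pred nat) s : count a s <= count (fun x => a x && ~~ b x) s + count b s.
Proof. elim: s => [|x s IH] //=; case: (a x); case: (b x) => /=; lia. Qed.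

Lemma count_gt c k : count (fun x => c < x) (iota 1 (c + k)) = k.
Proof.
rewrite iotaD count_cat.
have -> : count (fun x => c < x) (iota 1 c) = 0.
  rewrite (eq_in_count (a2 := pred0)) ?count_pred0 // => x; rewrite mem_iota /=; lia.
rewrite (eq_in_count (a2 := predT)) ?count_predT ?size_iota // => x; rewrite mem_iota /=; lia.
Qed.

Lemma index_iota_last n : 2 <= n -> index n.-1 (iota 1 n) = n - 2.
Proof.
move=> hn; have -> : n = (n - 2) + 2 by lia.
rewrite iotaD index_cat mem_iota.
have -> : (1 <= ((n - 2) + 2).-1 < 1 + (n - 2)) = false by apply/negbTE; lia.
have -> : 1 + (n - 2) = ((n - 2) + 2).-1 by lia.
by rewrite /= eqxx size_iota addn0 addnK.
Qed.

Ltac nlia :=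
  repeat match goal with
  | H : is_true (leq _ _) |- _ => revert H
  | H : @eq nat _ _ |- _ => revert H
  | H : is_true (leq _ _ && leq _ _) |- _ => revert H
  end;
  repeat match goal with H : _ |- _ => clear H end;
  intros; lia.

Section Lower.
Variables (S : seq nat) (c m n T : nat) (f : nat -> tree).
Hypothesis hS : forall k, k \in S -> k = 0 \/ (c < k /\ k <= m).
Hypothesis hcm : c < m.
Hypothesis hn : m + 5 <= n.
Hypothesis f0 : f 0 = T1 c n.
Hypothesis fT : f T = T2 c n.
Hypothesis fs : forall j, j < T -> rra_step S (f j) (f j.+1).

Let u j := lab (f j) 1.
Let z := n.-1.
Let hcn : c + 5 <= n. Proof. lia. Qed.

Lemma st j : j < T -> exists2 k, k \in S & lstep k (u j) (u j.+1).
Proof. by move=> h; apply: rra_step_l; apply: fs. Qed.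

Lemma keysu j : j <= T -> keys (u j) = iota 1 n.
Proof.
elim: j => [|j IH] hj.
  rewrite /u f0 keys_lab; congr iota; rewrite /T1 /= nodes_lc nodes_rp; lia.
case: (st hj) => k _ h; rewrite (lstep_keys h); apply: IH; lia.
Qed.

Lemma uniqu j : j <= T -> uniq (keys (u j)).
Proof. by move=> h; rewrite keysu // iota_uniq. Qed.

Lemma loss j p d : j < T -> anc (u j) p d -> ~~ anc (u j.+1) p d -> p \in arm (u j).
Proof. by move=> h; case: (st h) => k _ /lstep_loss; apply. Qed.

Lemma gain j p d : j < T -> ~~ anc (u j) p d -> anc (u j.+1) p d -> p \in arm (u j.+1).
Proof. by move=> h; case: (st h) => k _ /lstep_gain; apply. Qed.

Lemma lower : 4 * n - 4 * m - 4 <= T.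
Proof.
have u0 : u 0 = lab (T1 c n) 1 by rewrite /u f0.
have uT : u T = lab (T2 c n) 1 by rewrite /u fT.
have [j0 [_ j0T P0 P1]] : exists j, [/\ 0 <= j, j < T, anc (u j) z (n - 2) & ~~ anc (u j.+1) z (n - 2)].
  apply: (@trans_ex (fun j => anc (u j) z (n - 2))) => //=.
    by rewrite u0; apply: ancT1z; nlia.
  by rewrite uT; apply: nancT2z; nlia.
have zj0 := loss j0T P0 P1.
have nzT : z \notin arm (u T) by rewrite uT armT2 ?inE; nlia.
have [t [j0t tT zt after]] := @last_exit (fun j => z \in arm (u j)) j0 T (ltnW j0T) zj0 nzT.
have nzt1 : z \notin arm (u t.+1) by apply: after; nlia.
case: (st tT) => k kS stt.
have km : k <= m by case: (hS kS) => [->|[]].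
have [cc [A [B [y [C [sk ut ut1]]]]]] := lstep_exit stt zt nzt1.
have eA : A = LLeaf.
  case: A ut ut1 => [//|A1 a A2] ut ut1; exfalso.
  have h1 : anc (u t.+1) z a by rewrite ut1; apply: anc_plug_left; rewrite /= mem_cat in_cons eqxx orbT.
  have : ~~ anc (u T) z a by rewrite uT; apply: nancT2z; nlia.
  apply/negP; apply/negPn; apply/negP => hT.
  have [j [tj jT Pj Pj1]] := @trans_ex (fun j => anc (u j) z a) t.+1 T tT h1 (introN idP hT).
  have := loss jT Pj Pj1; apply/negP; apply: after; nlia.
move: ut; rewrite eA => ut.
have kt : keys (u t) = kctx cc ++ z :: (keys B ++ y :: keys C) by rewrite ut keys_plug.
have ktn := keysu (ltnW tT); rewrite kt in ktn.
have iotas : iota 1 n = iota 1 (n - 2) ++ z :: [:: n].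
  have e : n = (n - 2) + 2 by nlia.
  rewrite {1}e iotaD /= /z; congr (_ ++ _ :: _ :: _); nlia.
have zk : z \notin kctx cc.
  by move: (iota_uniq 1 n); rewrite -ktn cat_uniq => /and3P[_ /norP[] ].
have sz : size (kctx cc) = n - 2.
  have := index_iota_last (_ : 2 <= n); rewrite -/z -ktn index_cat (negbTE zk) /= eqxx addn0.
  by apply; nlia.
move: ktn; rewrite iotas => /eqP; rewrite eqseq_cat ?sz ?size_iota // => /andP[/eqP ek /eqP er].
case: er => er.
have eyC : y = n /\ keys C = [::].
  move: er; case: (keys B) => [|b Bs] /=; first by case=> -> ->.
  by case=> _; case: Bs.
case: eyC => ey eC.
have armC : arm C = [::].
  by case: (arm C) (@arm_keys C) => // a s /(_ a); rewrite eC in_cons eqxx => /(_ isT).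
have armt : arm (u t) = map snd cc ++ [:: z; n] by rewrite ut arm_plug /= ey armC.
have n2t : (n - 2) \in arm (u t).
  rewrite armt mem_cat; apply/orP; left.
  have [cc' [l [x ecc]]] : exists cc' l x, cc = rcons cc' (l, x).
    move: ek; case: (lastP cc) => [|cc' [l x]]; last by exists cc', l, x.
    by rewrite /kctx /=; have -> : n - 2 = (n - 3).+1 by nlia.
  rewrite ecc in ek *.
  rewrite kctx_rcons catA in ek.
  have : iota 1 (n - 2) = rcons (iota 1 (n - 3)) (n - 2).
    have -> : n - 2 = (n - 3) + 1 by nlia.
    by rewrite iotaD cats1; congr rcons; nlia.
  move=> e2; rewrite e2 cats1 in ek; move/rcons_inj: ek => [_ ->].
  by rewrite map_rcons mem_rcons mem_head.
have cnt : count (fun x => x \in arm (u t)) (iota 1 (n - 1)) <= k.+1.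
  rewrite -size_filter.
  apply: (@leq_trans (size (map snd cc ++ [:: z]))); last by rewrite size_cat size_map sk addn1.
  apply: uniq_leq_size; first by apply: filter_uniq; apply: iota_uniq.
  move=> x; rewrite mem_filter mem_iota armt => /andP[]; rewrite !mem_cat !in_cons orbF => h1 h2.
  case/orP: h1 => [->//|/orP[->|/eqP e]]; first by rewrite orbT.
  by move: h2; rewrite e; nlia.
pose b x j := x \in arm (u j).
have bound := @flips_le (fun j => arm (u j)) (iota 1 (n - 1)) T (iota_uniq _ _)
   (fun j h => let: ex_intro2 k _ hk := st h in lstep_arm hk).
have b0 x : 0 < x <= n - 1 -> b x 0 = false.
  by move=> hx; rewrite /b u0 armT1 // inE; apply/negbTE; nlia.
have bT x : 0 < x <= n - 1 -> b x T = false.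
  by move=> hx; rewrite /b uT armT2 // inE; apply/negbTE; nlia.
have hS' : forall k, k \in S -> k = 0 \/ c < k.
  by move=> k0 hk0; case: (hS hk0) => [->|[]]; [left|right].
have [j1 j1T fj1] := chain hcn hS' f0 fT fs.
have lb x : x \in iota 1 (n - 1) ->
    2 + 2 * ((c < x) && (x \notin arm (u t))) <= chg (b x) 0 T.
  rewrite mem_iota => hx.
  case: (leqP x c) => [xc|cx] /=.
    rewrite muln0 addn0; apply: (@chg2 _ j1) => //; try (apply: b0 || apply: bT); try nlia.
    by rewrite /b /u fj1; apply: arm_ch_last; nlia.
  case xt: (x \in arm (u t)) => /=.
    rewrite muln0 addn0; apply: (@chg2 _ t) => //; try (apply: b0 || apply: bT); try nlia.
  have xn3 : x <= n - 3.
    have : x != n - 2 by apply/eqP => e; move: xt; rewrite e n2t.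
    have : x != z by apply/eqP => e; move: xt; rewrite e zt.
    rewrite /z; nlia.
  have [j [_ jt Pj Pj1]] : exists j, [/\ 0 <= j, j < t, anc (u j) x (n - 2) & ~~ anc (u j.+1) x (n - 2)].
    have P0x : anc (u 0) x (n - 2) by rewrite u0; apply: ancT1; nlia.
    have Ptx : ~~ anc (u t) x (n - 2).
      by apply/negP => h; move: (anc_arm (uniqu (ltnW tT)) n2t h); rewrite xt.
    exact: (@trans_ex (fun j => anc (u j) x (n - 2)) 0 t (leq0n t) P0x Ptx).
  have xj := loss (ltn_trans jt tT) Pj Pj1.
  have [j' [tj' j'T Qj Qj1]] : exists j', [/\ t <= j', j' < T, ~~ anc (u j') x z & ~~ ~~ anc (u j'.+1) x z].
    have Qt : ~~ anc (u t) x z.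
      by apply/negP => h; move: (anc_arm (uniqu (ltnW tT)) zt h); rewrite xt.
    have QT : ~~ ~~ anc (u T) x z by rewrite negbK uT; apply: ancT2; nlia.
    exact: (@trans_ex (fun j => ~~ anc (u j) x z) t T (ltnW tT) Qt QT).
  have xj' := gain j'T Qj (negPn Qj1).
  apply: (@chg4 _ j t j'.+1) => //; try (apply: b0 || apply: bT); try nlia.
have lower_sum : 2 * (n - 1) + 2 * count (fun x => (c < x) && (x \notin arm (u t))) (iota 1 (n - 1))
    <= \sum_(x <- iota 1 (n - 1)) chg (fun j => x \in arm (u j)) 0 T.
  rewrite -{1}(size_iota 1 (n - 1)) -sum_2count big_seq [X in _ <= X]big_seq.
  by apply: leq_sum => x hx; apply: lb.
have cs : count (fun x => c < x) (iota 1 (n - 1)) <= count (fun x => (c < x) && (x \notin arm (u t))) (iota 1 (n - 1)) + count (fun x => x \in arm (u t)) (iota 1 (n - 1)).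
  exact: count_split.
have cg : count (fun x => c < x) (iota 1 (n - 1)) = n - 1 - c.
  have -> : n - 1 = c + (n - 1 - c) by nlia.
  by rewrite count_gt; nlia.
rewrite cg in cs.
nlia.
Qed.
End Lower.

Lemma path_bounds x s k : path ltn x s -> k \in x :: s -> x <= k <= last x s.
Proof.
elim: s x k => [|y s IH] x k /=.
  by move=> _; rewrite inE => /eqP ->; rewrite leqnn.
case/andP=> xy ps; rewrite in_cons => /orP[/eqP ->|hk].
  by move: (IH y y ps (mem_head _ _)) => /andP[_ h]; rewrite leqnn /=; apply: leq_trans h; apply: ltnW.
by move: (IH y k ps hk) => /andP[h1 ->]; rewrite andbT; apply: leq_trans h1; apply: ltnW.
Qed.

Theorem theorem3p9 (ls : seq nat) :
  ls != [::] -> 0 < head 0 ls -> sorted ltn ls ->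
  forall n : nat, last 0 ls + 4 < n ->
  exists T1 T2 : tree, nodes T1 = n /\ nodes T2 = n /\
    rra_dist_ge (0 :: ls) T1 T2 (4 * n - 4 * last 0 ls - 4).
Proof.
case: ls => [//|p s] _ /= p0 ps n hn.
have hb := path_bounds ps.
have pm : p <= last p s by move: (hb p (mem_head _ _)) => /andP[].
exists (T1 p.-1 n), (T2 p.-1 n); split; last split.
- rewrite /T1 /= nodes_lc nodes_rp; lia.
- rewrite /T2 /= nodes_lc nodes_rp; lia.
split.
- apply: connect => //; first by rewrite in_cons mem_head orbT.
  lia.
- move=> T /reach_path [f [f0 fT fs]].
  apply: (@lower (0 :: p :: s) p.-1 (last p s) n T f) => //.
  + move=> k; rewrite in_cons => /orP[/eqP ->|hk]; first by left.
    by right; move: (hb k hk) => /andP[h1 h2]; split => //; lia.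
  + lia.
  + lia.
Qed.
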